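(* Let $(X,G)$ be a $G$-system with metric $d$ such that $\rho=\mathrm{diam}_d(X)<1$ and the map $d:X\times X\to[0,\rho]$ is surjective. Suppose $\overline{\mathrm{mdim}}_{\mathrm M}(X,G,d)<\infty$. Then the maps $$(\mathcal A^+_d(X),\mathcal W)\to\mathbb R,\ \zeta_d\mapsto\overline{\mathrm{mdim}}_{\mathrm M}(X,G,\zeta_d)\quad\text{and}\quad(\mathcal A^+_d(X),\mathcal W)\to\mathbb R,\ \zeta_d\mapsto\underline{\mathrm{mdim}}_{\mathrm M}(X,G,\zeta_d)$$ are continuous.
   Context: $G$ is a countable discrete amenable group; a $G$-system is a compact metric space with a continuous $G$-action. $\mathcal A[0,\rho]$ is the set of continuous, increasing, subadditive $\zeta:[0,\rho]\to[0,\infty)$ with $\zeta^{-1}(0)=\{0\}$; $k_m(\zeta)=\liminf_{\varepsilon\to0^+}\frac{\log\zeta(\varepsilon)}{\log\varepsilon}$, $k_M(\zeta)=\limsup_{\varepsilon\to0^+}\frac{\log\zeta(\varepsilon)}{\log\varepsilon}$; $\mathcal A^+[0,\rho]=\{\zeta\in\mathcal A[0,\rho]:k_m(\zeta)=k_M(\zeta)>0\}$. For $\zeta\in\mathcal A^+[0,\rho]$ and $\varepsilon>0$ let $\tilde B(\zeta,\varepsilon)=\{\vartheta\in\mathcal A^+[0,\rho]:\zeta(x)(x^\varepsilon-1)<\vartheta(x)-\zeta(x)<\zeta(x)\frac{1-x^\varepsilon}{x^\varepsilon}\text{ for all }x\in(0,\rho]\}$; $\mathcal T$ is the topology on $\mathcal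 A^+[0,\rho]$ having these sets as a subbase. $\zeta_d(x,y)=\zeta(d(x,y))$, and $\mathcal A^+_d(X)=\{\zeta_d:\zeta\in\mathcal A^+[0,\rho]\}$; since $d$ is surjective onto $[0,\rho]$, $\zeta\mapsto\zeta_d$ is a bijection $\mathcal A^+[0,\rho]\to\mathcal A^+_d(X)$, and $\mathcal W$ is the topology on $\mathcal A^+_d(X)$ making this bijection a homeomorphism from $(\mathcal A^+[0,\rho],\mathcal T)$. Metric mean dimensions: for a Følner sequence $(F_n)$ and metric $\rho'$, $\rho'_F(x,y)=\max_{g\in F}\rho'(gx,gy)$, $s_F(\rho',\varepsilon,X)$ the maximal cardinality of a subset whose distinct points have $\rho'_F$-distance $>\varepsilon$; $\overline{\mathrm{mdim}}_{\mathrm M}(X,G,\rho')=\limsup_{\varepsilon\to0}\frac1{|\log\varepsilon|}\limsup_n\frac1{|F_n|}\log s_{F_n}(\rho',\varepsilon,X)$, $\underline{\mathrm{mdim}}_{\mathrm M}$ the same with $\liminf_{\varepsilon\to0}$. *)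

(* Defs.v *)
From HB Require Import structures.
From mathcomp Require Import all_boot all_order all_algebra.
From mathcomp Require Import finmap.
From mathcomp Require Import all_classical all_reals all_analysis.
Set Implicit Arguments. Unset Strict Implicit. Unset Printing Implicit Defensive.
Import Order.TTheory GRing.Theory Num.Theory.
Import numFieldNormedType.Exports.
Local Open Scope classical_set_scope.
Local Open Scope ring_scope.


Section Defs.
Variable R : realType.

Definition ltrans (G : groupType) (g : G) (F : {fset G}) : {fset G} :=
  [fset (g * x)%g | x in F]%fset.

Definition Folner (G : groupType) (F : nat -> {fset G}) : Prop :=
  (forall n, F n != fset0) /\
  forall g : G,
    (fun n => (#|` ((ltrans g (F n) `\` F n) `|` (F n `\` ltrans g (F n)))%fset|%:R
               / #|` F n|%:R : R)) @ \oo --> (0 : R).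

Definition continuous_action (G : groupType) (X : topologicalType)
  (act : G -> X -> X) : Prop :=
  (forall x, act 1%g x = x) /\
  (forall g h x, act (g * h)%g x = act g (act h x)) /\
  (forall g, continuous (act g)).

Definition metric_inducing (X : topologicalType) (d : X -> X -> R) : Prop :=
  (forall x y, 0 <= d x y) /\
  (forall x y, d x y = 0 <-> x = y) /\
  (forall x y, d x y = d y x) /\
  (forall x y z, d x z <= d x y + d y z) /\
  (forall x, nbhs x = filter_from [set e : R | 0 < e] (fun e => [set y | d x y < e])).

Definition dynmetric (G : groupType) (X : Type) (act : G -> X -> X)
  (r : X -> X -> R) (F : {fset G}) (x y : X) : R :=
  \big[Num.max/0]_(g <- F) r (act g x) (act g y).

Definition sep_number (G : groupType) (X : choiceType) (act : G -> X -> X)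
  (r : X -> X -> R) (F : {fset G}) (eps : R) : \bar R :=
  ereal_sup [set (#|` S|%:R)%:E | S in
    [set S : {fset X} | forall x y, x \in S -> y \in S -> x != y ->
                          eps < dynmetric act r F x y]].

Definition elog (x : \bar R) : \bar R :=
  match x with
  | r%:E => (ln r)%:E
  | +oo%E => +oo%E
  | -oo%E => -oo%E
  end.

Definition mdim_aux (G : groupType) (X : choiceType) (act : G -> X -> X)
  (F : nat -> {fset G}) (r : X -> X -> R) (eps : R) : \bar R :=
  ((`|ln eps|)^-1)%:E *
  limn_esup (fun n => ((#|` F n|%:R)^-1)%:E * elog (sep_number act r (F n) eps))%E.

Definition umdimM (G : groupType) (X : choiceType) (act : G -> X -> X)
  (F : nat -> {fset G}) (r : X -> X -> R) : \bar R :=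
  limf_esup (mdim_aux act F r) (at_right (0 : R)).

Definition lmdimM (G : groupType) (X : choiceType) (act : G -> X -> X)
  (F : nat -> {fset G}) (r : X -> X -> R) : \bar R :=
  limf_einf (mdim_aux act F r) (at_right (0 : R)).

Definition Aclass (rho : R) (z : R -> R) : Prop :=
  {within `[0, rho], continuous z} /\
  (forall x y, 0 <= x -> x <= y -> y <= rho -> z x <= z y) /\
  (forall x y, 0 <= x -> 0 <= y -> x + y <= rho -> z (x + y) <= z x + z y) /\
  (forall x, 0 <= x <= rho -> 0 <= z x) /\
  (forall x, 0 <= x <= rho -> (z x = 0 <-> x = 0)).

Definition km (z : R -> R) : \bar R :=
  limf_einf (fun e => (ln (z e) / ln e)%:E) (at_right (0 : R)).
Definition kM (z : R -> R) : \bar R :=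
  limf_esup (fun e => (ln (z e) / ln e)%:E) (at_right (0 : R)).

Definition Aplus (rho : R) (z : R -> R) : Prop :=
  Aclass rho z /\ km z = kM z /\ (0 < km z)%E.

Definition Btilde (rho : R) (z : R -> R) (eps : R) : set (R -> R) :=
  [set t | Aplus rho t /\
     forall x, 0 < x <= rho ->
       z x * (x `^ eps - 1) < t x - z x < z x * ((1 - x `^ eps) / x `^ eps)].

(* open sets of the topology T on A^+[0,rho] generated by the subbase
   { B~(z, eps) : z in A^+[0,rho], eps > 0 } : every point of U has a
   neighbourhood which is a finite intersection of subbasic sets
   (the empty intersection being A^+[0,rho] itself) contained in U. *)
Definition T_open (rho : R) (U : set (R -> R)) : Prop :=
  U `<=` Aplus rho /\
  forall z, U z ->
    exists (n : nat) (zs : 'I_n -> R -> R) (es : 'I_n -> R),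
      (forall i, Aplus rho (zs i) /\ 0 < es i) /\
      (forall i, Btilde rho (zs i) (es i) z) /\
      (forall t, Aplus rho t -> (forall i, Btilde rho (zs i) (es i) t) -> U t).

Definition T_continuous (rho : R) (f : (R -> R) -> R) : Prop :=
  forall V : set R, open V -> T_open rho [set z | Aplus rho z /\ V (f z)].

End Defs.

(* Main.v *)
Require Import Defs.
From HB Require Import structures.
From mathcomp Require Import all_boot all_order all_algebra.
From mathcomp Require Import finmap.
From mathcomp Require Import all_classical all_reals all_analysis.
From mathcomp Require Import lra.
Set Implicit Arguments. Unset Strict Implicit.
Import Order.TTheory GRing.Theory Num.Theory.
Import numFieldNormedType.Exports.
Local Open Scope classical_set_scope.
Local Open Scope ring_scope.


Section Gen.
Variable R : realType.
Implicit Types (h : R -> \bar R).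

Definition oi (d : R) : set R := [set x | 0 < x < d].

Lemma at_rightP (V : set R) :
  at_right (0:R) V <-> exists2 d : R, 0 < d & oi d `<=` V.
Proof.
split.
- rewrite /at_right /within => /nbhs_ballP [e e0 He].
  exists e => // x /andP [x0 xe]; apply: He => //.
  by rewrite -ball_normE /ball_ /= sub0r normrN gtr0_norm.
- move=> [d d0 Hd]; rewrite /at_right /within; apply/nbhs_ballP.
  exists d => // x; rewrite -ball_normE /ball_ /= sub0r normrN => xd x0.
  by apply: Hd; rewrite /oi /= x0 /= (le_lt_trans (ler_norm x)).
Qed.

Lemma oi_at d : 0 < d -> at_right (0:R) (oi d).
Proof. by move=> d0; apply/at_rightP; exists d. Qed.

Definition Su h d := ereal_sup (h @` oi d).
Definition Iu h d := ereal_inf (h @` oi d).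

Lemma LS1 h d : 0 < d -> (limf_esup h (at_right (0:R)) <= Su h d)%E.
Proof.
move=> d0; rewrite limf_esupE; apply: ereal_inf_lbound.
by exists (oi d) => //; apply: oi_at.
Qed.

Lemma LS2 h c : (forall d, 0 < d -> (c <= Su h d)%E) -> (c <= limf_esup h (at_right (0:R)))%E.
Proof.
move=> H; rewrite limf_esupE; apply: le_ereal_inf_tmp => _ [V /at_rightP [d d0 Hd] <-].
apply: (le_trans (H d d0)); apply: ereal_sup_le => _ [x xo <-].
by exists x => //; apply: Hd.
Qed.

Lemma LI1 h d : 0 < d -> (Iu h d <= limf_einf h (at_right (0:R)))%E.
Proof.
move=> d0; rewrite limf_einfE; apply: ereal_sup_ubound.
by exists (oi d) => //; apply: oi_at.
Qed.

Lemma LI2 h c : (forall d, 0 < d -> (Iu h d <= c)%E) -> (limf_einf h (at_right (0:R)) <= c)%E.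
Proof.
move=> H; rewrite limf_einfE; apply: ge_ereal_sup => _ [V /at_rightP [d d0 Hd] <-].
apply: le_trans (H d d0); apply: ereal_inf_le_tmp => _ [x xo <-].
by exists x => //; apply: Hd.
Qed.

Lemma LS3 h c : (limf_esup h (at_right (0:R)) < c)%E ->
  exists2 d, 0 < d & forall x, 0 < x < d -> (h x < c)%E.
Proof.
rewrite limf_esupE => /ereal_inf_lt [_ [V /at_rightP [d d0 Hd] <-] Hc].
exists d => // x xo; apply: le_lt_trans Hc; apply: ereal_sup_ubound.
by exists x => //; apply: Hd.
Qed.

Lemma LI3 h c : (c < limf_einf h (at_right (0:R)))%E ->
  exists2 d, 0 < d & forall x, 0 < x < d -> (c < h x)%E.
Proof.
rewrite limf_einfE => /ereal_sup_gt [_ [V /at_rightP [d d0 Hd] <-] Hc].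
exists d => // x xo; apply: lt_le_trans Hc _; apply: ereal_inf_lbound.
by exists x => //; apply: Hd.
Qed.

Lemma oi_half d : 0 < d -> oi d (d / 2).
Proof.
move=> d0; rewrite /oi /= divr_gt0 //= ltr_pdivrMr //.
by rewrite ltr_pMr // ltr1n.
Qed.

Lemma Su_ge0 h d : 0 < d -> (forall x, 0 <= h x)%E -> (0 <= Su h d)%E.
Proof.
move=> d0 H; apply: le_trans (H (d/2)) _; apply: ereal_sup_ubound.
by exists (d/2) => //; apply: oi_half.
Qed.

Lemma Iu_le_Su h d1 d2 : 0 < d1 -> 0 < d2 -> (Iu h d1 <= Su h d2)%E.
Proof.
move=> d1p d2p; set m := Num.min d1 d2.
have m0 : 0 < m by rewrite lt_min d1p d2p.
have om : forall d, m <= d -> oi d (m/2).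
  move=> d md; have := @oi_half m m0; rewrite /oi /= => /andP [-> h2] /=.
  exact: lt_le_trans h2 md.
apply: (@le_trans _ _ (h (m/2))).
  by apply: ereal_inf_lbound; exists (m/2) => //; apply: om; rewrite ge_min lexx.
by apply: ereal_sup_ubound; exists (m/2) => //; apply: om; rewrite ge_min lexx orbT.
Qed.

Lemma limsup_ge0 h : (forall x, 0 <= h x)%E -> (0 <= limf_esup h (at_right (0:R)))%E.
Proof. by move=> H; apply: LS2 => d d0; apply: Su_ge0. Qed.

Lemma liminf_ge0 h : (forall x, 0 <= h x)%E -> (0 <= limf_einf h (at_right (0:R)))%E.
Proof.
move=> H; apply: (@le_trans _ _ (Iu h 1)); last exact: LI1.
apply: le_ereal_inf_tmp => _ [x _ <-]; exact: H.
Qed.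

Lemma liminf_le_limsup h : (limf_einf h (at_right (0:R)) <= limf_esup h (at_right (0:R)))%E.
Proof.
apply: LS2 => d2 d2p; apply: LI2 => d1 d1p; exact: Iu_le_Su.
Qed.

Lemma le_limf_esup (T : choiceType) (X : filteredType T) (u v : X -> \bar R) (F : set_system X) :
  (forall x, u x <= v x)%E -> (limf_esup u F <= limf_esup v F)%E.
Proof.
move=> uv; rewrite !limf_esupE; apply: le_ereal_inf_tmp => _ [V FV <-].
apply: (@le_trans _ _ (ereal_sup (u @` V))).
  by apply: ereal_inf_lbound; exists V.
by apply: ge_ereal_sup => _ [x Vx <-]; apply: le_trans (uv x) _; apply: ereal_sup_ubound; exists x.
Qed.

End Gen.


Section Tr.
Variable R : realType.
Implicit Types (h : R -> \bar R).

Lemma LIMU (A M : \bar R) (L : R) : 0 < L -> (0 <= M)%E ->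
  (forall L', L < L' -> (A <= L'%:E * M)%E) -> (A <= L%:E * M)%E.
Proof.
move=> L0; case: M => [m| |] //= m0 H.
- rewrite lee_fin in m0.
  apply/lee_addgt0Pr => e e0.
  have m1 : 0 < m + 1 by lra.
  have := H (L + e / (m + 1)); rewrite ltrDl divr_gt0 // => /(_ isT) HA.
  apply: le_trans HA _; rewrite -EFinD lee_fin mulrDl lerD2l.
  rewrite mulrAC ler_pdivrMr //; nra.
- by rewrite gt0_muley ?lte_fin // leey.
Qed.

Lemma LIML (B M : \bar R) (L : R) : 0 < L -> (0 <= M)%E ->
  (forall L', 0 < L' < L -> (L'%:E * M <= B)%E) -> (L%:E * M <= B)%E.
Proof.
move=> L0; case: M => [m| |] //= m0 H.
- rewrite lee_fin in m0.
  have L2 : 0 < L / 2 < L by apply/andP; split; lra.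
  case: B H => [b| |] H.
  + rewrite lee_fin; apply/ler_addgt0Pr => e e0.
    have m1 : 0 < m + 1 by lra.
    set s := Num.min (L / 2) (e / (m + 1)).
    have s0 : 0 < s by rewrite lt_min; apply/andP; split; [lra| exact: divr_gt0].
    have s1 : s <= L / 2 by rewrite ge_min lexx.
    have s2 : s <= e / (m + 1) by rewrite ge_min lexx orbT.
    rewrite ler_pdivlMr // in s2.
    have := H (L - s); rewrite lee_fin; move=> /(_ _) HH.
    have : (L - s) * m <= b by apply: HH; apply/andP; split; lra.
    nra.
  + by rewrite leey.
  + by have := H _ L2; rewrite -EFinM.
- have := H _ (_ : 0 < L / 2 < L); rewrite !gt0_muley ?lte_fin //; last lra.
  by apply; apply/andP; split; lra.
Qed.

Lemma TU h1 h2 (L : R) : 0 < L -> (forall x, 0 <= h2 x)%E ->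
  (forall L', L < L' -> forall d', 0 < d' -> exists2 d, 0 < d &
     forall x, 0 < x < d -> exists2 y, 0 < y < d' & (h1 x <= L'%:E * h2 y)%E) ->
  (limf_esup h1 (at_right (0:R)) <= L%:E * limf_esup h2 (at_right (0:R)))%E.
Proof.
move=> L0 h20 H; apply: LIMU => //; first exact: limsup_ge0.
move=> L' LL'; have L'0 : 0 < L' by lra.
rewrite -lee_pdivrMl //; apply: LS2 => d' d'0.
have [d d0 Hd] := H L' LL' d' d'0.
apply: (le_trans (lee_wpmul2l _ (LS1 h1 d0))); first by rewrite lee_fin invr_ge0 ltW.
rewrite lee_pdivrMl //; apply: ge_ereal_sup => _ [x xo <-].
have [y yo Hy] := Hd x xo; apply: le_trans Hy _.
apply: lee_wpmul2l; first by rewrite lee_fin ltW.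
by apply: ereal_sup_ubound; exists y.
Qed.

Lemma TL h1 h2 (L : R) : 0 < L -> (forall x, 0 <= h2 x)%E ->
  (forall L', 0 < L' < L -> forall d', 0 < d' -> exists2 d, 0 < d &
     forall x, 0 < x < d -> exists2 y, 0 < y < d' & (L'%:E * h2 y <= h1 x)%E) ->
  (L%:E * limf_einf h2 (at_right (0:R)) <= limf_einf h1 (at_right (0:R)))%E.
Proof.
move=> L0 h20 H; apply: LIML => //; first exact: liminf_ge0.
move=> L' /andP [L'0 LL']; rewrite -lee_pdivlMl //; apply: LI2 => d' d'0.
have [d d0 Hd] : exists2 d, 0 < d & forall x, 0 < x < d -> exists2 y, 0 < y < d' & (L'%:E * h2 y <= h1 x)%E by apply: H => //; rewrite L'0 LL'.
rewrite lee_pdivlMl //; apply: le_trans (LI1 h1 d0).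
apply: le_ereal_inf_tmp => _ [x xo <-].
have [y yo Hy] := Hd x xo; apply: le_trans Hy.
apply: lee_wpmul2l; first by rewrite lee_fin ltW.
by apply: ereal_inf_lbound; exists y.
Qed.

End Tr.


Section Sep.
Variable R : realType.
Variables (G : groupType) (X : choiceType) (act : G -> X -> X) (F : nat -> {fset G}).

Definition Nn (r : X -> X -> R) (eps : R) : \bar R :=
  limn_esup (fun n => ((#|` F n|%:R)^-1)%:E * elog (sep_number act r (F n) eps))%E.

Lemma mdim_auxE (r : X -> X -> R) (eps : R) : mdim_aux act F r eps = (((`|ln eps|)^-1)%:E * Nn r eps)%E.
Proof. by []. Qed.

Lemma sep_vals (r : X -> X -> R) (Fn : {fset G}) (eps : R) :
  sep_number act r Fn eps = 0%E \/ (1 <= sep_number act r Fn eps)%E.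
Proof.
set s := sep_number _ _ _ _.
have s0 : (0 <= s)%E.
  apply: ereal_sup_ubound; exists fset0%fset; first by move=> x y; rewrite inE.
  by rewrite cardfs0.
case: (leP s 0%E) => [s0'|]; first by left; apply/eqP; rewrite eq_le s0' s0.
move=> /ereal_sup_gt [_ [S HS <-]]; rewrite lte_fin ltr0n => cS.
right; apply: (@le_trans _ _ ((#|` S|%:R)%:E)).
  by rewrite lee_fin ler1n.
by apply: ereal_sup_ubound; exists S.
Qed.

Lemma elog_ge0 (x : \bar R) : (x = 0%E \/ (1 <= x)%E) -> (0 <= elog x)%E.
Proof.
case=> [->|]; first by rewrite /= ln0.
case: x => [r| |] //=; rewrite lee_fin => r1; rewrite lee_fin; exact: ln_ge0.
Qed.

Lemma elog_mono (x y : \bar R) : (x = 0%E \/ (1 <= x)%E) -> (y = 0%E \/ (1 <= y)%E) ->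
  (x <= y)%E -> (elog x <= elog y)%E.
Proof.
move=> hx hy; case: hx => [-> _|x1 xy].
  apply: le_trans (elog_ge0 hy); by rewrite -[0%E]/((0:R)%:E) /elog /= ln0.
case: x x1 xy => [r| |] //= r1; case: y hy => [s| |] //= hy; rewrite ?lee_fin //.
- move=> rs; rewrite lee_fin in r1; rewrite ler_ln ?posrE //; lra.
- by move=> _; rewrite leey.
Qed.

Lemma sep_mono (r1 r2 : X -> X -> R) (Fn : {fset G}) (e1 e2 : R) :
  (forall x y, e1 < dynmetric act r1 Fn x y -> e2 < dynmetric act r2 Fn x y) ->
  (sep_number act r1 Fn e1 <= sep_number act r2 Fn e2)%E.
Proof.
move=> H; apply: ereal_sup_le => _ [S HS <-]; exists S => //.
by move=> x y xS yS xy; apply: H; apply: HS.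
Qed.

Lemma oo_proper : ~ (\oo : set_system nat) set0.
Proof. by case=> N _ /(_ N (leqnn N)). Qed.

Lemma Nn_ge0 (r : X -> X -> R) (eps : R) : (0 <= Nn r eps)%E.
Proof.
apply: limf_esup_ge0; first exact: oo_proper.
move=> n; apply: mule_ge0; first by rewrite lee_fin invr_ge0.
exact/elog_ge0/sep_vals.
Qed.

Lemma Nn_mono (r1 r2 : X -> X -> R) (e1 e2 : R) :
  (forall Fn x y, e1 < dynmetric act r1 Fn x y -> e2 < dynmetric act r2 Fn x y) ->
  (Nn r1 e1 <= Nn r2 e2)%E.
Proof.
move=> H; apply: le_limf_esup => n; apply: lee_wpmul2l; first by rewrite lee_fin invr_ge0.
apply: elog_mono; try exact: sep_vals.
by apply: sep_mono; apply: H.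
Qed.

Lemma bigmax_transfer (s : seq G) (f1 f2 : G -> R) (c1 c2 : R) : 0 <= c1 ->
  (forall g, c1 < f1 g -> c2 < f2 g) ->
  c1 < \big[Num.max/0]_(g <- s) f1 g -> c2 < \big[Num.max/0]_(g <- s) f2 g.
Proof.
move=> c10 H; elim: s => [|a s IH]; first by rewrite !big_nil; lra.
rewrite !big_cons !lt_max => /orP [/H ->//|/IH ->]; by rewrite orbT.
Qed.

Lemma dyn_transfer (r1 r2 : X -> X -> R) (c1 c2 : R) : 0 <= c1 ->
  (forall a b, c1 < r1 a b -> c2 < r2 a b) ->
  forall Fn x y, c1 < dynmetric act r1 Fn x y -> c2 < dynmetric act r2 Fn x y.
Proof.
move=> c10 H Fn x y; apply: bigmax_transfer => // g; exact: H.
Qed.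

End Sep.


Section Zeta.
Variable R : realType.
Variables (rho : R) (z : R -> R).
Hypothesis zA : Aplus rho z.
Hypothesis rho0 : 0 < rho.
Hypothesis rho1 : rho < 1.

Lemma z_mono x y : 0 <= x -> x <= y -> y <= rho -> z x <= z y.
Proof. by case: zA => [[_ [H _]] _]; apply: H. Qed.

Lemma z_sub x y : 0 <= x -> 0 <= y -> x + y <= rho -> z (x + y) <= z x + z y.
Proof. by case: zA => [[_ [_ [H _]]] _]; apply: H. Qed.

Lemma z0 : z 0 = 0.
Proof. by case: zA => [[_ [_ [_ [_ H]]]] _]; apply/H => //; rewrite lexx ltW. Qed.

Lemma z_pos x : 0 < x <= rho -> 0 < z x.
Proof.
case: zA => [[_ [_ [_ [H1 H2]]]] _] /andP [x0 xr].
have h : 0 <= x <= rho by rewrite ltW.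
rewrite lt_neqAle H1 // andbT eq_sym; apply/eqP => /(H2 x h) x00; lra.
Qed.

Lemma z_ge0 x : 0 <= x <= rho -> 0 <= z x.
Proof. by case: zA => [[_ [_ [_ [H1 H2]]]] _]; apply: H1. Qed.

Lemma z_cont0 e : 0 < e -> exists2 d, 0 < d & forall x, 0 <= x -> x < d -> x <= rho -> z x < e.
Proof.
move=> e0; case: zA => [[C _] _].
have [_ C0 _] := (continuous_within_itvP _ rho0).1 C.
have [d d0 Hd] := (at_rightP _).1 ((cvgrPdist_lt _ _).1 C0 e e0).
exists d => // x x0 xd xr; case: (ltrP 0 x) => [xp|x0'].
  have := Hd x; rewrite /oi /= xp xd => /(_ isT); rewrite z0 sub0r normrN.
  by apply: le_lt_trans; exact: ler_norm.
have -> : x = 0 by lra.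
by rewrite z0.
Qed.

Lemma z_ivt v : 0 < v -> v < z rho -> exists2 r, 0 < r <= rho & z r = v.
Proof.
move=> v0 vr; case: zA => [[C _] _].
have hv : Num.min (z 0) (z rho) <= v <= Num.max (z 0) (z rho).
  rewrite z0 ge_min le_max; apply/andP; split; [apply/orP; left | apply/orP; right]; lra.
have [r] := IVT (ltW rho0) C hv.
  rewrite in_itv /= => /andP [r0 rr] zr; exists r => //.
  rewrite rr andbT lt_neqAle r0 andbT; apply/eqP => r00.
  by move: zr; rewrite -r00 z0; lra.
Qed.

Lemma z_nmul (n : nat) x : 0 <= x -> n%:R * x <= rho -> z (n%:R * x) <= n%:R * z x.
Proof.
move=> x0; elim: n => [|n IH]; first by rewrite !mul0r z0.
rewrite -natr1 !mulrDl !mul1r => H.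
have nx0 : 0 <= n%:R * x by rewrite mulr_ge0.
apply: le_trans (z_sub nx0 x0 H) _; rewrite lerD2r; apply: IH; lra.
Qed.

Lemma z_lin x : 0 < x <= rho / 2 -> z (rho / 2) / rho * x <= z x.
Proof.
move=> /andP [x0 xr]; set n := Num.Def.truncn (rho / x).
have rx0 : 0 <= rho / x by rewrite divr_ge0 // ltW.
have /andP [nl nu] := truncn_itv rx0; rewrite -/n in nl nu.
have nl' : n%:R * x <= rho by rewrite -ler_pdivlMr.
have nu' : rho < n%:R * x + x by move: nu; rewrite -natr1 ltr_pdivrMr // mulrDl mul1r.
have H1 : z (rho / 2) <= z (n%:R * x) by apply: z_mono; lra.
have H2 := z_nmul (ltW x0) nl'.
have zx0 : 0 <= z x by apply: z_ge0; lra.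
have H3 : n%:R * z x <= (rho / x) * z x by apply: ler_wpM2r.
have H4 : z (rho / 2) <= rho / x * z x by lra.
rewrite mulrAC ler_pdivlMr // in H4.
rewrite mulrAC ler_pdivrMr //; lra.
Qed.

Definition ell (x : R) : R := ln (z x) / ln x.

Lemma ell_le2 : exists2 d, 0 < d & forall x, 0 < x < d -> ell x <= 2.
Proof.
have r0 := rho0; have r1 := rho1.
have zr2 : 0 < z (rho / 2) by apply: z_pos; apply/andP; split; lra.
set c := z (rho / 2) / rho.
have c0 : 0 < c by rewrite divr_gt0.
exists (Num.min (rho / 2) c); first by rewrite lt_min; apply/andP; split; lra.
move=> x /andP [x0]; rewrite lt_min => /andP [xr xc].
have hl : c * x <= z x by apply: z_lin; rewrite x0 ltW.
have zx : x * x <= z x by apply: le_trans _ hl; apply: ler_wpM2r; lra.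
have lx : ln x < 0 by apply: ln_lt0; apply/andP; split; lra.
have xx0 : 0 < x * x by rewrite mulr_gt0.
have : ln (x * x) <= ln (z x) by rewrite ler_ln ?posrE //; lra.
rewrite lnM ?posrE // => H.
rewrite /ell ler_ndivrMr //; lra.
Qed.

Lemma k_props : exists2 k, 0 < k & km z = k%:E /\ kM z = k%:E.
Proof.
case: zA => _ [ekm k0].
have kMle : (kM z <= 2%:E)%E.
  have [d d0 Hd] := ell_le2; apply: le_trans (LS1 _ d0) _.
  by apply: ge_ereal_sup => _ [x xo <-]; rewrite lee_fin; apply: Hd.
move: k0 kMle; rewrite ekm; case: (kM z) => [k| |] //= k0 _.
by exists k => //.
Qed.

Lemma ell_lo k g : km z = k%:E -> 0 < g ->
  exists2 d, 0 < d & forall x, 0 < x < d -> k - g < ell x.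
Proof.
move=> ek g0; have : ((k - g)%:E < km z)%E by rewrite ek lte_fin; lra.
by move/LI3 => [d d0 H]; exists d => // x /H; rewrite lte_fin.
Qed.

Lemma ell_hi k g : kM z = k%:E -> 0 < g ->
  exists2 d, 0 < d & forall x, 0 < x < d -> ell x < k + g.
Proof.
move=> ek g0; have : (kM z < (k + g)%:E)%E by rewrite ek lte_fin; lra.
by move/LS3 => [d d0 H]; exists d => // x /H; rewrite lte_fin.
Qed.

End Zeta.


Section RA.
Variable R : realType.

Lemma ptU (N N' : \bar R) (u v L' : R) : 0 <= u -> (0 <= N)%E -> (N <= N')%E ->
  u <= L' * v -> (u%:E * N <= L'%:E * (v%:E * N'))%E.
Proof.
move=> u0 N0 NN' uv; have N'0 : (0 <= N')%E by apply: le_trans NN'.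
apply: le_trans (lee_wpmul2l _ NN') _; first by rewrite lee_fin.
by rewrite muleA -EFinM; apply: lee_wpmul2r; rewrite // lee_fin.
Qed.

Lemma ptL (N N' : \bar R) (u v L' : R) : 0 <= L' * v -> (0 <= N')%E -> (N' <= N)%E ->
  L' * v <= u -> (L'%:E * (v%:E * N') <= u%:E * N)%E.
Proof.
move=> p0 N'0 NN' uv; rewrite muleA -EFinM.
apply: le_trans (lee_wpmul2l _ NN') _; first by rewrite lee_fin.
by apply: lee_wpmul2r; rewrite // (le_trans N'0 NN').
Qed.

Lemma invle (P Q c : R) : 0 < P -> 0 < Q -> 0 < c -> Q <= c * P -> P^-1 <= c * Q^-1.
Proof.
move=> P0 Q0 c0 H; rewrite -[c * _]/(c / Q) ler_pdivlMr // mulrC ler_pdivrMr //.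
Qed.

Lemma invle2 (P Q c : R) : 0 < P -> 0 < Q -> 0 < c -> c * P <= Q -> c * Q^-1 <= P^-1.
Proof.
move=> P0 Q0 c0 H; rewrite -[c * _]/(c / Q) ler_pdivrMr // mulrC ler_pdivlMr //.
Qed.

Lemma neg_ln (x : R) : 0 < x < 1 -> `|ln x| = - ln x /\ 0 < - ln x.
Proof. by move=> hx; have h := ln_lt0 hx; rewrite ltr0_norm //; split => //; lra. Qed.

Lemma lnbig (c : R) : 0 < c -> exists2 d, 0 < d & forall r, 0 < r < d -> c <= - ln r.
Proof.
move=> c0; exists (expR (- c)); first exact: expR_gt0.
move=> r /andP [r0 rd]; have := rd; rewrite -ltr_ln ?posrE ?expR_gt0 // expRK; lra.
Qed.

Lemma invlt (k L' : R) : 0 < k -> 0 < L' -> k^-1 < L' -> L'^-1 < k.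
Proof. by move=> k0 L0 H; rewrite -[k]invrK ltf_pV2 // ?posrE ?invr_gt0. Qed.

Lemma invlt2 (k L' : R) : 0 < k -> 0 < L' -> L' < k^-1 -> k < L'^-1.
Proof. by move=> k0 L0 H; rewrite -[k]invrK ltf_pV2 // ?posrE ?invr_gt0. Qed.

End RA.

Section Main.
Variable R : realType.
Variables (G : groupType) (X : choiceType) (act : G -> X -> X) (F : nat -> {fset G}).
Variables (d : X -> X -> R) (rho : R) (z : R -> R).
Hypothesis dr : forall a b, 0 <= d a b <= rho.
Hypothesis zA : Aplus rho z.
Hypothesis rho0 : 0 < rho.
Hypothesis rho1 : rho < 1.

Let zd := fun x y => z (d x y).
Let a := mdim_aux act F zd.
Let b := mdim_aux act F d.

Lemma NZ1 r eps : 0 <= r <= rho -> 0 <= eps -> z r <= eps ->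
  (Nn act F zd eps <= Nn act F d r)%E.
Proof.
move=> /andP [r0 rr] e0 zr; apply: Nn_mono; apply: dyn_transfer => // x y.
rewrite /zd => H; rewrite ltNge; apply/negP => dxy.
have := dr x y => /andP [d0 _]; have := z_mono zA d0 dxy rr; lra.
Qed.

Lemma NZ2 r eps : 0 <= r -> eps < z r -> (Nn act F d r <= Nn act F zd eps)%E.
Proof.
move=> r0 zr; apply: Nn_mono; apply: dyn_transfer => // x y H.
rewrite /zd; apply: lt_le_trans zr _; have := dr x y => /andP [_ dd].
by apply: (z_mono zA) => //; apply: ltW.
Qed.

Lemma a_ge0 x : (0 <= a x)%E.
Proof. by rewrite /a mdim_auxE; apply: mule_ge0; [rewrite lee_fin invr_ge0|exact: Nn_ge0]. Qed.

Lemma b_ge0 x : (0 <= b x)%E.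
Proof. by rewrite /b mdim_auxE; apply: mule_ge0; [rewrite lee_fin invr_ge0|exact: Nn_ge0]. Qed.

Lemma ell_eq r : 0 < r < 1 -> - ln (z r) = ell z r * (- ln r).
Proof.
move=> hr; have := ln_lt0 hr => lr; rewrite /ell mulrN divfK //; lra.
Qed.

Lemma A_up k : km z = k%:E -> 0 < k ->
  (limf_esup a (at_right (0:R)) <= (k^-1)%:E * limf_esup b (at_right (0:R)))%E.
Proof.
move=> ek k0; have r0 := rho0; have r1 := rho1.
apply: TU; [by rewrite invr_gt0 | exact: b_ge0 |].
move=> L' kL' d' d'0; have L'0 : 0 < L' by apply: lt_trans kL'; rewrite invr_gt0.
have Lk := invlt k0 L'0 kL'.
have g0 : 0 < k - L'^-1 by lra.
have [d0 d00 H0] := ell_lo ek g0.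
set D := Num.min (Num.min d' d0) rho.
have D0 : 0 < D by rewrite !lt_min d'0 d00 r0.
have Dr : D <= rho by rewrite ge_min lexx orbT.
have zD : 0 < z D by apply: (z_pos zA); rewrite D0 Dr.
exists (Num.min (z D) (1/2)); first by rewrite lt_min zD; lra.
move=> eps /andP [e0]; rewrite lt_min => /andP [eD e2].
have ezr : eps < z rho by apply: lt_le_trans eD _; apply: (z_mono zA) => //; lra.
have [r /andP [rp rr] zr] := z_ivt zA r0 e0 ezr.
have rD : r < D.
  rewrite ltNge; apply/negP => Dr'; have := z_mono zA (ltW D0) Dr' rr; lra.
have rd' : r < d' by apply: lt_le_trans rD _; rewrite !ge_min lexx.
have rd0 : r < d0 by apply: lt_le_trans rD _; rewrite !ge_min lexx orbT.
exists r; first by rewrite rp rd'.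
have hr : 0 < r < 1 by rewrite rp; lra.
have he : 0 < eps < 1 by rewrite e0; lra.
have [ne Pe] := neg_ln he; have [nr Qr] := neg_ln hr.
have el := H0 r (_ : 0 < r < d0); rewrite rp rd0 in el; have {}el := el isT.
rewrite /a /b !mdim_auxE; apply: ptU; [by rewrite invr_ge0 | exact: Nn_ge0 | |].
  by apply: NZ1; rewrite ?(ltW rp) ?rr ?zr // ltW.
rewrite ne nr; apply: invle => //.
rewrite -zr ell_eq //.
have : 1 < L' * ell z r.
  have el2 : L'^-1 < ell z r by lra.
  by rewrite -(ltr_pM2l L'0) mulfV ?gt_eqF // in el2.
nra.
Qed.

Lemma ln2_gt0 : 0 < ln (2 : R).
Proof. by apply: ln_gt0; lra. Qed.

Lemma ln_half (x : R) : 0 < x -> - ln (x / 2) = - ln x + ln 2.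
Proof. by move=> x0; rewrite ln_div ?posrE //; lra. Qed.

Lemma B_up k : kM z = k%:E -> 0 < k ->
  (limf_esup b (at_right (0:R)) <= k%:E * limf_esup a (at_right (0:R)))%E.
Proof.
move=> ek k0; have r0 := rho0; have r1 := rho1; have l2 := ln2_gt0.
apply: TU => //; first exact: a_ge0.
move=> L' kL' d' d'0.
have g0 : 0 < (L' - k) / 2 by lra.
have [d1 d10 H1] := ell_hi ek g0.
set c := ln 2 / ((L' - k) / 2).
have c0 : 0 < c by rewrite divr_gt0.
have [d2 d20 H2] := lnbig c0.
have e0 : 0 < Num.min (2 * d') 1 by rewrite lt_min; lra.
have [d3 d30 H3] := z_cont0 zA r0 e0.
exists (Num.min (Num.min d1 d2) (Num.min d3 rho)); first by rewrite !lt_min d10 d20 d30 r0.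
move=> r /andP [rp]; rewrite !lt_min => /andP [/andP [rd1 rd2] /andP [rd3 rr]].
have zr0 : 0 < z r by apply: (z_pos zA); rewrite rp ltW.
have zr1 := H3 r (ltW rp) rd3 (ltW rr); rewrite lt_min in zr1.
case/andP: zr1 => zr1 zr2.
exists (z r / 2); first by apply/andP; split; lra.
have hr : 0 < r < 1 by rewrite rp; lra.
have he : 0 < z r / 2 < 1 by apply/andP; split; lra.
have [ne Pe] := neg_ln he; have [nr Qr] := neg_ln hr.
have el := H1 r (_ : 0 < r < d1); rewrite rp rd1 in el; have {}el := el isT.
have Qc := H2 r (_ : 0 < r < d2); rewrite rp rd2 in Qc; have {}Qc := Qc isT.
rewrite /a /b !mdim_auxE; apply: ptU; [by rewrite invr_ge0 | exact: Nn_ge0 | |].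
  by apply: NZ2; [exact: ltW | lra].
rewrite ne nr; apply: invle => //; first lra.
rewrite ln_half // ell_eq //.
have hc : (L' - k) / 2 * c = ln 2 by rewrite /c mulrC divfK // (gt_eqF g0).
have : ln 2 <= (L' - k) / 2 * (- ln r).
  by rewrite -hc; apply: ler_wpM2l => //; lra.
have : ell z r * (- ln r) <= (k + (L' - k) / 2) * (- ln r).
  by apply: ler_wpM2r; lra.
lra.
Qed.

Lemma C_lo k : kM z = k%:E -> 0 < k ->
  ((k^-1)%:E * limf_einf b (at_right (0:R)) <= limf_einf a (at_right (0:R)))%E.
Proof.
move=> ek k0; have r0 := rho0; have r1 := rho1; have l2 := ln2_gt0.
apply: TL; [by rewrite invr_gt0 | exact: b_ge0 |].
move=> L' /andP [L'0 kL'] d' d'0.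
have Lk := invlt2 k0 L'0 kL'.
have g0 : 0 < (L'^-1 - k) / 2 by lra.
have [d1 d10 H1] := ell_hi ek g0.
set c := ln 2 / ((L'^-1 - k) / 2).
have c0 : 0 < c by rewrite divr_gt0.
have [d2 d20 H2] := lnbig c0.
set D := Num.min (Num.min d' d1) (Num.min d2 rho).
have D0 : 0 < D by rewrite !lt_min d'0 d10 d20 r0.
have Dr : D <= rho by rewrite !ge_min lexx !orbT.
have zD : 0 < z D by apply: (z_pos zA); rewrite D0 Dr.
exists (Num.min (z D / 2) (1/2)); first by rewrite lt_min; apply/andP; split; lra.
move=> eps /andP [e0]; rewrite lt_min => /andP [eD e2].
have ezr : 2 * eps < z rho by have := z_mono zA (ltW D0) Dr (lexx _); lra.
have e20 : 0 < 2 * eps by lra.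
have [r /andP [rp rr] zr] := z_ivt zA r0 e20 ezr.
have rD : r < D.
  rewrite ltNge; apply/negP => Dr'; have := z_mono zA (ltW D0) Dr' rr; lra.
have rd' : r < d' by apply: lt_le_trans rD _; rewrite !ge_min lexx.
have rd1 : r < d1 by apply: lt_le_trans rD _; rewrite !ge_min lexx !orbT.
have rd2 : r < d2 by apply: lt_le_trans rD _; rewrite !ge_min lexx !orbT.
exists r; first by rewrite rp rd'.
have hr : 0 < r < 1 by rewrite rp; lra.
have he : 0 < eps < 1 by rewrite e0; lra.
have [ne Pe] := neg_ln he; have [nr Qr] := neg_ln hr.
have el := H1 r (_ : 0 < r < d1); rewrite rp rd1 in el; have {}el := el isT.
have Qc := H2 r (_ : 0 < r < d2); rewrite rp rd2 in Qc; have {}Qc := Qc isT.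
rewrite /a /b !mdim_auxE; apply: ptL.
- by rewrite mulr_ge0 ?invr_ge0 // ltW.
- exact: Nn_ge0.
- by apply: NZ2; [exact: ltW | lra].
rewrite ne nr; apply: invle2 => //.
have -> : eps = z r / 2 by lra.
rewrite ln_half; last lra.
rewrite ell_eq //.
have hc : (L'^-1 - k) / 2 * c = ln 2 by rewrite /c mulrC divfK // (gt_eqF g0).
have : ln 2 <= (L'^-1 - k) / 2 * (- ln r).
  by rewrite -hc; apply: ler_wpM2l => //; lra.
have : ell z r * (- ln r) <= (k + (L'^-1 - k) / 2) * (- ln r).
  by apply: ler_wpM2r; lra.
have LL : L' * L'^-1 = 1 by rewrite mulfV // gt_eqF.
move=> h1 h2.
have h3 : ell z r * - ln r + ln 2 <= L'^-1 * (- ln r) by lra.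
have := ler_wpM2l (ltW L'0) h3; rewrite mulrA LL mul1r; lra.
Qed.

Lemma D_lo k : km z = k%:E -> 0 < k ->
  (k%:E * limf_einf a (at_right (0:R)) <= limf_einf b (at_right (0:R)))%E.
Proof.
move=> ek k0; have r0 := rho0; have r1 := rho1.
apply: TL => //; first exact: a_ge0.
move=> L' /andP [L'0 kL'] d' d'0.
have g0 : 0 < k - L' by lra.
have [d1 d10 H1] := ell_lo ek g0.
have e0 : 0 < Num.min d' 1 by rewrite lt_min; lra.
have [d3 d30 H3] := z_cont0 zA r0 e0.
exists (Num.min (Num.min d1 d3) rho); first by rewrite !lt_min d10 d30 r0.
move=> r /andP [rp]; rewrite !lt_min => /andP [/andP [rd1 rd3] rr].
have zr0 : 0 < z r by apply: (z_pos zA); rewrite rp ltW.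
have zr1 := H3 r (ltW rp) rd3 (ltW rr); rewrite lt_min in zr1.
case/andP: zr1 => zr1 zr2.
exists (z r); first by apply/andP; split.
have hr : 0 < r < 1 by rewrite rp; lra.
have he : 0 < z r < 1 by apply/andP; split.
have [ne Pe] := neg_ln he; have [nr Qr] := neg_ln hr.
have el := H1 r (_ : 0 < r < d1); rewrite rp rd1 in el; have {}el := el isT.
rewrite /a /b !mdim_auxE; apply: ptL.
- by rewrite mulr_ge0 ?invr_ge0 // ltW.
- exact: Nn_ge0.
- by apply: NZ1; rewrite ?(ltW rp) ?(ltW rr) ?(ltW zr0).
rewrite ne nr; apply: invle2 => //.
rewrite ell_eq //.
by apply: ler_wpM2r; lra.
Qed.

Lemma mdim_z : exists2 k, 0 < k & km z = k%:E /\
  umdimM act F zd = ((k^-1)%:E * umdimM act F d)%E /\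
  lmdimM act F zd = ((k^-1)%:E * lmdimM act F d)%E.
Proof.
have [k k0 [ekm ekM]] := k_props zA rho0 rho1.
exists k => //; split => //; split.
- apply/eqP; rewrite eq_le; apply/andP; split; first exact: A_up.
  by rewrite lee_pdivrMl //; exact: B_up.
- apply/eqP; rewrite eq_le; apply/andP; split; last exact: C_lo.
  by rewrite lee_pdivlMl //; exact: D_lo.
Qed.

End Main.


Section Cont.
Variable R : realType.

Lemma invc (c k e : R) : 0 < k -> 0 < e ->
  exists2 eta, 0 < eta & forall y, `|k - y| < eta -> `|c / k - c / y| < e.
Proof.
move=> k0 e0.
have H : (fun y : R => c * y^-1) @ k --> c * k^-1.
  apply: cvgM; first exact: cvg_cst.
  by apply: cvgV; [rewrite gt_eqF | exact: cvg_id].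
have [eta eta0 He] := (nbhs_ballP _ _).1 ((cvgrPdist_lt _ _).1 H e e0).
exists eta => // y ky; apply: He; by rewrite -ball_normE /ball_ /=.
Qed.

Lemma pow_lt1 (x eta : R) : 0 < x < 1 -> 0 < eta -> 0 < x `^ eta < 1.
Proof.
move=> /andP [x0 x1] e0; rewrite powR_gt0 //=.
have hx : ln x < 0 by apply: ln_lt0; rewrite x0.
rewrite -ltr_ln ?posrE ?powR_gt0 // ln_powR ln1; nra.
Qed.

Variable rho : R.
Hypothesis rho0 : 0 < rho.
Hypothesis rho1 : rho < 1.

Lemma Bt_pt (z t : R -> R) eta x : Aplus rho z -> Aplus rho t -> 0 < eta ->
  Btilde rho z eta t -> 0 < x <= rho ->
  ell z x - eta < ell t x < ell z x + eta.
Proof.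
move=> zA tA e0 [_ Hb] hx; have := Hb x hx => /andP [h1 h2].
have r1 := rho1; case/andP: (hx) => x0 xr.
have hx1 : 0 < x < 1 by rewrite x0; lra.
have /andP [p0 p1] := pow_lt1 hx1 e0.
set p := x `^ eta in h1 h2 p0 p1.
have zx := z_pos zA hx; have tx := z_pos tA hx.
have lx : ln x < 0 by apply: ln_lt0.
have lp : ln p = eta * ln x by rewrite ln_powR.
have A1 : z x * p < t x by nra.
have A2 : t x * p < z x.
  move: h2; rewrite mulrA ltr_pdivlMr //; nra.
have B1 : ln (z x) + eta * ln x < ln (t x).
  by rewrite -lp -lnM ?posrE // ltr_ln ?posrE // mulr_gt0.
have B2 : ln (t x) + eta * ln x < ln (z x).
  by rewrite -lp -lnM ?posrE // ltr_ln ?posrE // mulr_gt0.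
have ez : ell z x * ln x = ln (z x) by rewrite /ell divfK // lt_eqF.
apply/andP; split.
- rewrite /ell ltr_ndivlMr // mulrBl -/(ell z x) ez; nra.
- rewrite /ell ltr_ndivrMr // mulrDl -/(ell z x) ez; nra.
Qed.

Lemma KB (z t : R -> R) eta kz kt : Aplus rho z -> Aplus rho t -> 0 < eta ->
  Btilde rho z eta t -> km z = kz%:E -> kM z = kz%:E -> km t = kt%:E -> kM t = kt%:E ->
  `|kz - kt| <= eta.
Proof.
move=> zA tA e0 Bt ez eZ et eT; have r0 := rho0.
have up : kt <= kz + eta.
  apply/ler_addgt0Pr => g g0.
  have [d d0 Hd] := ell_hi eZ g0.
  have m0 : 0 < Num.min d rho by rewrite lt_min d0.
  have := LS1 (fun e => (ell t e)%:E) m0; rewrite -/(kM t) eT => H.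
  rewrite -lee_fin; apply: le_trans H _; apply: ge_ereal_sup => _ [x xo <-].
  move: xo; rewrite /oi /= => /andP [x0]; rewrite lt_min => /andP [xd xr]; rewrite lee_fin.
  have hx : 0 < x <= rho by rewrite x0 ltW.
  have /andP [_ h2] := Bt_pt zA tA e0 Bt hx.
  have hxd : 0 < x < d by rewrite x0 xd.
  have := Hd x hxd; lra.
have lo : kz - eta <= kt.
  apply/ler_addgt0Pr => g g0.
  have [d d0 Hd] := ell_lo ez g0.
  have m0 : 0 < Num.min d rho by rewrite lt_min d0.
  have := LI1 (fun e => (ell t e)%:E) m0; rewrite -/(km t) et => H.
  rewrite -lerBlDr -lee_fin; apply: le_trans H; apply: le_ereal_inf_tmp => _ [x xo <-].
  move: xo; rewrite /oi /= => /andP [x0]; rewrite lt_min => /andP [xd xr]; rewrite lee_fin.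
  have hx : 0 < x <= rho by rewrite x0 ltW.
  have /andP [h1 _] := Bt_pt zA tA e0 Bt hx.
  have hxd : 0 < x < d by rewrite x0 xd.
  have := Hd x hxd; lra.
rewrite ler_norml; apply/andP; split; lra.
Qed.

Lemma Bt_self (z : R -> R) eta : Aplus rho z -> 0 < eta -> Btilde rho z eta z.
Proof.
move=> zA e0; split => // x hx; have r1 := rho1; case/andP: (hx) => x0 xr.
have hx1 : 0 < x < 1 by rewrite x0; lra.
have /andP [p0 p1] := pow_lt1 hx1 e0.
have zx := z_pos zA hx.
rewrite subrr; apply/andP; split.
- by rewrite pmulr_rlt0 //; lra.
- by rewrite pmulr_rgt0 // divr_gt0 //; lra.
Qed.

Lemma TC (c : R) (f : (R -> R) -> R) :
  (forall z, Aplus rho z -> f z = c / fine (km z)) -> T_continuous rho f.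
Proof.
move=> Hf V oV; split; first by move=> z [].
move=> z [zA Vz]; have [kz kz0 [ekm ekM]] := k_props zA rho0 rho1.
rewrite Hf // ekm /= in Vz.
have [e e0 He] := (nbhs_ballP _ _).1 (open_nbhs_nbhs (conj oV Vz)).
have [eta eta0 Heta] := invc c kz0 e0.
have eta2 : 0 < eta / 2 by rewrite divr_gt0.
exists 1%N, (fun _ => z), (fun _ => eta / 2); split; first by move=> i; split.
split; first by move=> i; apply: Bt_self.
move=> t tA Bt; split => //.
have [kt kt0 [etm etM]] := k_props tA rho0 rho1.
rewrite Hf // etm /=.
have := KB zA tA eta2 (Bt ord0) ekm ekM etm etM => kb.
apply: He; rewrite -ball_normE /ball_ /=; apply: Heta; lra.
Qed.

End Cont.


Section Deg.
Variable R : realType.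
Variables (G : groupType) (X : choiceType) (act : G -> X -> X) (F : nat -> {fset G}).
Hypothesis Xsub : forall a b : X, a = b.

Lemma sep_le1 (r : X -> X -> R) (Fn : {fset G}) (eps : R) :
  (sep_number act r Fn eps <= 1)%E.
Proof.
apply: ge_ereal_sup => _ [S _ <-]; rewrite lee_fin lern1.
case: (fset_0Vmem S) => [->|[x xS]]; first by rewrite cardfs0.
rewrite -(cardfs1 x); apply: fsubset_leq_card; apply/fsubsetP => y _.
by rewrite (Xsub y x) inE.
Qed.

Lemma aux0 (r : X -> X -> R) eps : mdim_aux act F r eps = 0%E.
Proof.
rewrite mdim_auxE.
have -> : Nn act F r eps = 0%E.
  rewrite /Nn; have -> : (fun n => ((#|` F n|%:R)^-1)%:E * elog (sep_number act r (F n) eps))%E = fun _ => 0%E.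
    apply/funext => n.
    have -> : elog (sep_number act r (F n) eps) = 0%E.
      case: (sep_vals act r (F n) eps) => [->|h1].
        by rewrite -[0%E]/((0:R)%:E) /elog /= ln0.
      have -> : sep_number act r (F n) eps = 1%E.
        by apply/eqP; rewrite eq_le h1 sep_le1.
      by rewrite /= ln1.
    by rewrite mule0.
  exact: (cvg_limn_einf_sup (cvg_cst _)).2.
by rewrite mule0.
Qed.

Lemma umdim0 (r : X -> X -> R) : umdimM act F r = 0%E /\ lmdimM act F r = 0%E.
Proof.
have U0 : umdimM act F r = 0%E.
  apply/eqP; rewrite eq_le; apply/andP; split; last first.
    by apply: limsup_ge0 => x; rewrite aux0.
  apply: le_trans (LS1 _ ltr01) _; apply: ge_ereal_sup => _ [x _ <-]; by rewrite aux0.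
split => //; apply/eqP; rewrite eq_le; apply/andP; split; last first.
  by apply: liminf_ge0 => x; rewrite aux0.
by rewrite -U0; apply: liminf_le_limsup.
Qed.

End Deg.

Lemma Tconst (R : realType) (rho c : R) (f : (R -> R) -> R) :
  (forall z, Aplus rho z -> f z = c) -> T_continuous rho f.
Proof.
move=> Hf V oV; split; first by move=> z [].
move=> z [zA Vz]; exists 0%N, (fun _ => z), (fun _ => 1).
split; first by case.
split; first by case.
move=> t tA _; split => //; by rewrite Hf // -(Hf z zA).
Qed.

Theorem mainTheorem16 (R : realType) (G : groupType) (X : topologicalType)
  (act : G -> X -> X) (F : nat -> {fset G}) (d : X -> X -> R) (rho : R) :
  countable [set: G] ->
  Folner R F ->
  continuous_action act ->
  metric_inducing d ->
  compact [set: X] ->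
  range (fun p : X * X => d p.1 p.2) = [set r : R | 0 <= r <= rho] ->
  rho < 1 ->
  (umdimM act F d < +oo)%E ->
  (forall z, Aplus rho z ->
     umdimM act F (fun x y => z (d x y)) \is a fin_num /\
     lmdimM act F (fun x y => z (d x y)) \is a fin_num) /\
  T_continuous rho (fun z => fine (umdimM act F (fun x y => z (d x y)))) /\
  T_continuous rho (fun z => fine (lmdimM act F (fun x y => z (d x y)))).
Proof.
move=> _ _ _ [dge [d0 _]] _ Hrange rho1 Hfin.
have dr : forall a b, 0 <= d a b <= rho.
  move=> a b; have : range (fun p : X * X => d p.1 p.2) (d a b) by exists (a, b).
  by rewrite Hrange.
case: (ltrP 0 rho) => r0.
- have Uge0 : (0 <= umdimM act F d)%E.
    by apply: limsup_ge0 => x; rewrite mdim_auxE; apply: mule_ge0; [rewrite lee_fin invr_ge0|exact: Nn_ge0].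
  have Lge0 : (0 <= lmdimM act F d)%E.
    by apply: liminf_ge0 => x; rewrite mdim_auxE; apply: mule_ge0; [rewrite lee_fin invr_ge0|exact: Nn_ge0].
  have LU : (lmdimM act F d <= umdimM act F d)%E by apply: liminf_le_limsup.
  have [u [eU u0]] : exists u, umdimM act F d = u%:E /\ 0 <= u.
    by move: Uge0 Hfin; case: (umdimM act F d) => [u| |] //= u0 _; exists u.
  have [l eL] : exists l, lmdimM act F d = l%:E.
    by move: LU Lge0; rewrite eU; case: (lmdimM act F d) => [l| |] //= _ _; exists l.
  have Hz : forall z, Aplus rho z -> exists2 k, 0 < k & [/\ km z = k%:E,
      umdimM act F (fun x y => z (d x y)) = (k^-1 * u)%:E &
      lmdimM act F (fun x y => z (d x y)) = (k^-1 * l)%:E].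
    move=> z zA; have [k k0 [ek [e1 e2]]] := mdim_z act F dr zA r0 rho1.
    by exists k => //; split => //; rewrite ?e1 ?e2 ?eU ?eL -EFinM.
  split; [|split].
  + move=> z zA; have [k _ [_ -> ->]] := Hz z zA; by split.
  + apply: (TC r0 rho1 (c := u)) => z zA; have [k _ [-> -> _]] := Hz z zA.
    by rewrite /= mulrC.
  + apply: (TC r0 rho1 (c := l)) => z zA; have [k _ [-> _ ->]] := Hz z zA.
    by rewrite /= mulrC.
- have Xsub : forall a b : X, a = b.
    move=> a b; apply/d0; have := dr a b; lra.
  have U0 := fun r => proj1 (umdim0 act F Xsub r).
  have L0 := fun r => proj2 (umdim0 act F Xsub r).
  split; [|split].
  + by move=> z zA; rewrite U0 L0.
  + by apply: (Tconst (c := 0)) => z zA; rewrite U0.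
  + by apply: (Tconst (c := 0)) => z zA; rewrite L0.
Qed.
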